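(* Let $\mathrm{H}$ be a set of Horn rules and let $\mathrm{H}'\subseteq\mathrm H$ be a fracturable subset of the dependency graph $\mathsf{DG}(\mathrm{H})$. Then $\mathrm{H}\setminus\mathrm{H}'$ permutes above $\mathrm{H}'$.
   Context: Fix a non-empty finite set $\mathtt{E}$ of edge types and a countably infinite set $\mathtt S$ of sequents (atomic labels). A g-sequent is a finite directed graph with vertices in a universe $\mathcal U$, edge relations $\mathcal{E}_a$ for $a\in\mathtt{E}$, and a labelling of vertices by sequents; it is written $\Gamma\vdash\Delta$ with $\Gamma$ the set of edge atoms $w\mathcal{E}_a u$ and $\Delta$ the set of prefixed sequents $w:S$; commas denote disjoint union. Let $\overline{\mathtt E}=\{\bar a\mid a\in\mathtt E\}$, $\bar{\bar z}=z$, $\overline{x_1\cdots x_n}=\bar x_n\cdots\bar x_1$, $\varepsilon$ the empty string. For $s=x_1\cdots x_n$, $w\mathcal{E}_s u$ abbreviates edge atoms $w\mathcal{E}_{x_1}v_1,\dots,v_{n-1}\mathcal{E}_{x_n}u$ for some vertices $v_i$, with $v\mathcal E_{\bar a}z$ meaning $z\mathcal E_a v$ and $w\mathcal E_\varepsilon u$ meaning $w=u$. A forward Horn rule $h_f$ (for $a\in\mathtt E$, string $s$) has premise $\Gamma,w\mathcal{E}_s u,w\mathcal{E}_a u\vdash\Delta$ and conclusion $\Gamma,w\mathcal{E}_s u\vdash\Delta$; a backward Horn rule $h_b$ is the same with $w\mathcal{E}_a u$ replaced by $u\mathcal{E}_a w$. Their grammars are $\mathbf{G}(h_f)=\{a\longrightarrow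 s,\bar a\longrightarrow\bar s\}$, $\mathbf{G}(h_b)=\{\bar a\longrightarrow s,a\longrightarrow\bar s\}$; for a production rule $p=x\longrightarrow t$ set $\bar p=\bar x\longrightarrow\bar t$; $(p,\bar p)$ is a production pair, and $P(\mathbf G)$ is the set of production pairs of a rule set $\mathbf G$ closed under $p\mapsto\bar p$; $P(h):=P(\mathbf G(h))$. Dependency graph: for distinct production pairs $(p,\bar p),(p',\bar p')$ with $p=x\longrightarrow s$, $p'=y\longrightarrow t$, $(p',\bar p')$ depends on $(p,\bar p)$, written $(p,\bar p)\sqsubset(p',\bar p')$, iff $s$ or $\bar s$ has the form $s_1ys_2$. $\sqsubseteq$ is the reflexive-transitive closure of $\sqsubset$. For a set $\mathrm H$ of Horn rules, $\mathsf{DG}(\mathrm H)=(\mathrm H,\sqsubseteq')$ where $h\sqsubseteq' h'$ iff $(p,\bar p)\sqsubseteq(p',\bar p')$ for $(p,\bar p)\in P(h)$, $(p',\bar p')\in P(h')$ (in the dependency relation of the union of the grammars of $\mathrm H$). In a dependency graph $(V,\sqsubseteq)$, a subset $V'\subseteq V$ is fracturable iff there are no $v\in V'$, $v'\in V\setminus V'$ with $v\sqsubseteq v'$; $V''$ is anti-fracturable iff $V''=V\setminus V'$ for some fracturable $V'$. Permutation: $\mathrm{R}_1$ permutes above $\mathrm{R}_2$ iff whenever $\mathcal{G}$ is obtained from g-sequents $\mathcal{G}_1,\dots,\mathcal{G}_n$ by an application of some $\sigma\in\mathrm{R}_2$ followed by an application of some $\rho\in\mathrm{R}_1$, then $\mathcal{G}$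 can be obtained from $\mathcal{G}_1,\dots,\mathcal{G}_n$ by applications of $\rho$ followed by an application of $\sigma$. *)

(* Defs.v *)
From HB Require Import structures.
From mathcomp Require Import all_boot finmap.
From Stdlib Require Import Relations.

Set Implicit Arguments.
Unset Strict Implicit.
Unset Printing Implicit Defensive.

Local Open Scope fset_scope.

(* The countably infinite set of sequents (atomic labels). *)
Definition sequent := nat.

Section HornRules.

Variable E : finType.

(* Letters of \overline{E} \cup E : (a, false) is a, (a, true) is \bar a. *)
Definition letter := (E * bool)%type.
Definition bar_letter (x : letter) : letter := (x.1, ~~ x.2).
Definition bar_string (s : seq letter) : seq letter := rev (map bar_letter s).

Variant horn := HornF of E & seq letter | HornB of E & seq letter.

Definition horn_string (h : horn) : seq letter :=
  match h with HornF _ s => s | HornB _ s => s end.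

Definition production := (letter * seq letter)%type.
Definition bar_prod (p : production) : production :=
  (bar_letter p.1, bar_string p.2).

Definition grammar (h : horn) : production -> Prop :=
  fun p => match h with
  | HornF a s => p = ((a, false), s) \/ p = ((a, true), bar_string s)
  | HornB a s => p = ((a, true), s) \/ p = ((a, false), bar_string s)
  end.

Definition prodpair := (production * production)%type.

Definition prod_pairs (G : production -> Prop) : prodpair -> Prop :=
  fun pp => G pp.1 /\ pp.2 = bar_prod pp.1.

(* Production pairs are unordered pairs {p, \bar p}. *)
Definition same_pair (pp pp' : prodpair) : Prop :=
  pp' = pp \/ pp' = (pp.2, pp.1).

Definition depends (pp pp' : prodpair) : Prop :=
  ~ same_pair pp pp' /\
  (exists s1 s2, pp.1.2 = s1 ++ pp'.1.1 :: s2 \/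
                 bar_string pp.1.2 = s1 ++ pp'.1.1 :: s2).

Definition union_grammar (H : horn -> Prop) : production -> Prop :=
  fun p => exists h, H h /\ grammar h p.

Definition dep_le (G : production -> Prop) : relation prodpair :=
  clos_refl_trans prodpair
    (fun pp pp' => prod_pairs G pp /\ prod_pairs G pp' /\ depends pp pp').

Definition DG_le (H : horn -> Prop) (h h' : horn) : Prop :=
  exists pp pp', prod_pairs (grammar h) pp /\ prod_pairs (grammar h') pp' /\
                 dep_le (union_grammar H) pp pp'.

Definition fracturable (T : Type) (V : T -> Prop) (le : T -> T -> Prop)
  (V' : T -> Prop) : Prop :=
  (forall v, V' v -> V v) /\
  ~ (exists v v', V' v /\ V v' /\ ~ V' v' /\ le v v').

Variable U : choiceType.

(* Gamma |- Delta : Gamma the edge atoms  w E_a u  encoded as (a, w, u),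
   Delta the prefixed sequents  w : S  encoded as (w, S). *)
Record gseq := GSeq {
  gedges : {fset (E * U * U)};
  glabels : {fset (U * sequent)} }.

Definition gvertices (G : gseq) : {fset U} := [fset p.1 | p in glabels G].

Definition wf_gseq (G : gseq) : Prop :=
  (forall w S S', (w, S) \in glabels G -> (w, S') \in glabels G -> S = S') /\
  (forall a w u, (a, w, u) \in gedges G ->
     w \in gvertices G /\ u \in gvertices G).

Definition edge_step (Gam : {fset (E * U * U)}) (w : U) (x : letter) (v : U) :=
  if x.2 then (x.1, v, w) \in Gam else (x.1, w, v) \in Gam.

Fixpoint epath (Gam : {fset (E * U * U)}) (w : U) (s : seq letter) (u : U)
  : Prop :=
  match s with
  | [::] => w = u
  | x :: s' => exists v, edge_step Gam w x v /\ epath Gam v s' u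
  end.

Definition horn_atom (h : horn) (w u : U) : E * U * U :=
  match h with HornF a _ => (a, w, u) | HornB a _ => (a, u, w) end.

(* An application of h with premise P and conclusion C:
   P = Gamma, w E_s u, (new atom) |- Delta and C = Gamma, w E_s u |- Delta,
   the comma being disjoint union. *)
Definition horn_app (h : horn) (P C : gseq) : Prop :=
  wf_gseq P /\ wf_gseq C /\ glabels P = glabels C /\
  exists w u, horn_atom h w u \notin gedges C /\
              gedges P = horn_atom h w u |` gedges C /\
              epath (gedges C) w (horn_string h) u.

Definition permutes_above (R1 R2 : horn -> Prop) : Prop :=
  forall rho sigma, R1 rho -> R2 sigma ->
  forall G1 G2 G, horn_app sigma G1 G2 -> horn_app rho G2 G ->
  exists G', clos_trans gseq (horn_app rho) G1 G' /\ horn_app sigma G' G.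

End HornRules.

(* Main.v *)
Require Import Defs.
From HB Require Import structures.
From mathcomp Require Import all_boot finmap.
From Stdlib Require Import Relations Classical.

Local Open Scope fset_scope.

Section Aux.
Variable E : finType.
Variable U : choiceType.

Lemma epath_split (r : E * U * U) (Gam : {fset (E * U * U)}) s :
  forall w u, epath (r |` Gam) w s u ->
  epath Gam w s u \/ exists x, x \in s /\ x.1 = r.1.1.
Proof.
elim: s => [|x s IH] w u /=; first by left.
move=> [v [st p]].
have [Hx|Hx] : edge_step Gam w x v \/ x.1 = r.1.1.
  move: st; rewrite /edge_step; case: (x.2) => /fset1UP [e|Hin];
   by [right; rewrite -e | left].
  case: (IH _ _ p) => [p'|[y [ys Hy]]].
  - by left; exists v.
  - by right; exists y; rewrite in_cons ys orbT.
by right; exists x; rewrite in_cons eqxx.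
Qed.

Lemma epath_mono (r : E * U * U) (Gam : {fset (E * U * U)}) s :
  forall w u, epath Gam w s u -> epath (r |` Gam) w s u.
Proof.
elim: s => [|x s IH] w u //= [v [st p]]; exists v; split; last exact: IH.
by move: st; rewrite /edge_step; case: (x.2) => ?; apply: fset1Ur.
Qed.

Lemma wf_sub (A B : gseq E U) : glabels A = glabels B ->
  (forall e, e \in gedges A -> e \in gedges B) -> wf_gseq B -> wf_gseq A.
Proof.
move=> hl hs [h1 h2]; rewrite /wf_gseq /gvertices hl; split; first exact: h1.
by move=> a w u /hs; apply: h2.
Qed.

Lemma bar_letterK : involutive (@bar_letter E).
Proof. by case=> a b; rewrite /bar_letter /= negbK. Qed.

Lemma bar_stringK : involutive (@bar_string E).
Proof.
by move=> s; rewrite /bar_string map_rev revK -map_comp (eq_map bar_letterK) map_id.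
Qed.

Lemma grammar_bar (h : horn E) p : grammar h p -> grammar h (bar_prod p).
Proof.
rewrite /bar_prod /bar_letter; case: h => a s /= [->|->] /=;
  by [right | left; rewrite bar_stringK].
Qed.

Definition hletter (h : horn E) : E := match h with HornF a _ => a | HornB a _ => a end.

Lemma horn_atom1 (h : horn E) (w u : U) : (horn_atom h w u).1.1 = hletter h.
Proof. by case: h. Qed.

Lemma grammar_first (h : horn E) : grammar h (match h with
  HornF a s => ((a, false), s) | HornB a s => ((a, true), s) end).
Proof. by case: h => a s /=; left. Qed.

Lemma grammar_any {h : horn E} {x : letter E} : x.1 = hletter h ->
  exists t, grammar h (x, t).
Proof.
case: x => a b /= ->; case: h => c s /=; case: b.
- by exists (bar_string s); right.
- by exists s; left.
- by exists s; left.
- by exists (bar_string s); right.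
Qed.

Lemma dep_key (H : horn E -> Prop) (sigma rho : horn E) x :
  H sigma -> H rho -> x \in horn_string sigma -> x.1 = hletter rho ->
  DG_le H sigma rho.
Proof.
move=> Hs Hr xin xl.
set p := match sigma with
  HornF a s => ((a, false), s) | HornB a s => ((a, true), s) end.
have gp : grammar sigma p := grammar_first sigma.
have p2 : p.2 = horn_string sigma by rewrite /p; case: (sigma).
have [t gt] := grammar_any xl.
exists (p, bar_prod p).
case: (classic (same_pair (p, bar_prod p) ((x, t), bar_prod (x, t)))) => sp.
- exists (p, bar_prod p); split; first by [].
  split; last exact: rt_refl.
  case: sp => e.
    have -> : p = (x, t) by have := congr1 fst e.
    by split.
  have e1 : (x, t) = bar_prod p by have := congr1 fst e.
  have : grammar rho (bar_prod (bar_prod p)) by rewrite -e1; apply: grammar_bar.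
  rewrite /bar_prod /= bar_letterK bar_stringK -surjective_pairing => gp'.
  by split.
- exists ((x, t), bar_prod (x, t)); split; first by [].
  split; first by [].
  apply: rt_step; split; first by split => //; exists sigma.
  split; first by split => //; exists rho.
  split; first exact: sp.
  move: xin; rewrite -p2 => /splitPr [s1 s2].
  by exists s1, s2; left.
Qed.

End Aux.

Theorem mainTheorem5 (E : finType) (U : choiceType) (HE : 0 < #|{: E}|)
  (H H' : horn E -> Prop) :
  fracturable H (DG_le H) H' ->
  permutes_above U (fun h => H h /\ ~ H' h) H'.
Proof.
move=> [HsubH Hfr] rho sigma [Hr Hnr] Hs G1 G2 G
  [wf1 [wf2 [lab12 [w1 [u1 [nin1 [e12 p1]]]]]]]
  [_ [wfG [lab2 [w2 [u2 [nin2 [e2 p2]]]]]]].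
set sa := horn_atom sigma w1 u1 in nin1 e12 p1 *.
set ra := horn_atom rho w2 u2 in nin2 e2 p2 *.
have key : epath (gedges G) w1 (horn_string sigma) u1.
  rewrite e2 in p1; case: (epath_split _ _ _ _ _ _ _ p1) => // [[x [xin xl]]].
  exfalso; apply: Hfr; exists sigma, rho; do 3 split => //.
  apply: (@dep_key E H sigma rho x (HsubH _ Hs) Hr xin); by rewrite xl /ra horn_atom1.
have sanG : sa \notin gedges G.
  by apply: contra nin1; rewrite e2; apply: fset1Ur.
have ran : ra != sa.
  by apply/eqP => e; move: nin1; rewrite e2 -e fset1U1.
set G' := GSeq (sa |` gedges G) (glabels G).
have wf' : wf_gseq G'.
  apply: (@wf_sub E U G' G1 _ _ wf1); first by rewrite /= lab12 lab2.
  by move=> e /=; rewrite e12 e2 !in_fset1U => /orP [->|->]; rewrite ?orbT.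
exists G'; split.
- apply: t_step; do 2 split => //; split; first by rewrite /= lab12 lab2.
  exists w2, u2; split.
  + by rewrite /= in_fset1U negb_or ran.
  + split; last exact: (epath_mono _ _ _ _ _ _ _ p2).
    rewrite e12 e2 /=; apply/fsetP => e; rewrite !in_fset1U.
    by case: (e == sa); case: (e == ra); rewrite ?orbT.
- do 2 split => //; split; first by [].
  by exists w1, u1.
Qed.
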